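(* Let $q$ be a prime power, $m\ge 1$, and let $1\le k\le n-1$ be integers. Let $\bar{\mathbb{F}}_{q^m}$ denote the algebraic closure of $\mathbb{F}_{q^m}$. Then the set $$S_{\mathrm{MRD}} := \{X \in \bar{\mathbb{F}}_{q^m}^{k\times (n-k)} \mid \det([\,I_k \mid X\,]\, A)\neq 0 \text{ for all } A \in \mathbb{F}_q^{n\times k} \text{ of rank } k\}$$ is a generic subset of $\bar{\mathbb{F}}_{q^m}^{k\times (n-k)}$.
   Context: We identify $\bar{\mathbb{F}}_{q^m}^{k\times(n-k)}$ with $\bar{\mathbb{F}}_{q}^{r}$, $r=k(n-k)$, by treating the entries of $X$ as coordinates $x_1,\dots,x_r$. The Zariski topology on $\bar{\mathbb{F}}_q^r$ is the topology whose closed sets are the algebraic sets $V(S)=\{\boldsymbol x\in\bar{\mathbb{F}}_q^r \mid f(\boldsymbol x)=0 \ \forall f\in S\}$ for subsets $S\subseteq \mathbb{F}_q[x_1,\dots,x_r]$; Zariski-open sets are their complements. A subset of $\bar{\mathbb{F}}_q^r$ is called generic if it contains a non-empty Zariski-open set. $I_k$ is the $k\times k$ identity matrix. *)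

(* Defs.v *)
From HB Require Import structures.
From mathcomp Require Import all_boot all_order all_algebra all_field.
From mathcomp Require Import mpoly.
Set Implicit Arguments. Unset Strict Implicit. Unset Printing Implicit Defensive.
Import GRing.Theory.
Local Open Scope ring_scope.

Definition peval (F K : fieldType) (phi : {rmorphism F -> K}) (r : nat)
  (p : {mpoly F[r]}) (x : 'I_r -> K) : K := (map_mpoly phi p).@[x].

Definition zariski_V (F K : fieldType) (phi : {rmorphism F -> K}) (r : nat)
  (S : {mpoly F[r]} -> Prop) : ('I_r -> K) -> Prop :=
  fun x => forall p, S p -> peval phi p x = 0.

Definition zariski_open (F K : fieldType) (phi : {rmorphism F -> K}) (r : nat)
  (U : ('I_r -> K) -> Prop) : Prop :=
  exists S : {mpoly F[r]} -> Prop, forall x, U x <-> ~ zariski_V phi S x.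

Definition generic (F K : fieldType) (phi : {rmorphism F -> K}) (r : nat)
  (T : ('I_r -> K) -> Prop) : Prop :=
  exists U, zariski_open phi U /\ (exists x, U x) /\ (forall x, U x -> T x).

(* Identification of K^{k x (n-k)} with K^r, r = k(n-k): entries as coordinates. *)
Definition coords_to_mx (K : Type) (k l : nat) (x : 'I_(k * l) -> K) : 'M[K]_(k, l) :=
  vec_mx (\row_i x i).

(* S_MRD: matrices X with det([I_k | X] A) <> 0 for all A in F_q^{n x k} of rank k.
   Here n = k + l (l = n - k), and A is mapped into K entrywise by phi. *)
Definition S_MRD (F K : fieldType) (phi : {rmorphism F -> K}) (k l : nat)
  (X : 'M[K]_(k, l)) : Prop :=
  forall A : 'M[F]_(k + l, k), \rank A = k ->
    \det (row_mx 1%:M X *m map_mx phi A) != 0.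

Definition algebraic_over (L K : fieldType) (g : {rmorphism L -> K}) : Prop :=
  forall x : K, exists2 p : {poly L}, p != 0 & root (map_poly g p) x.

(* Main.v *)
Require Import Defs.
From HB Require Import structures.
From mathcomp Require Import all_boot all_order all_algebra all_field.
From mathcomp Require Import mpoly.
Import GRing.Theory.
Local Open Scope ring_scope.

Set Implicit Arguments. Unset Strict Implicit. Unset Printing Implicit Defensive.
Section MP.
Variable K : closedFieldType.

Lemma muni_eval n (p : {mpoly K[n.+1]}) (v : 'I_n.+1 -> K) :
  p.@[v] = (map_poly (meval (fun i => v (widen_ord (leqnSn n) i))) (muni p)).[v ord_max].
Proof.
rewrite mevalE muniE raddf_sum horner_sum /=; apply: eq_bigr => m _.
rewrite -mul_polyC rmorphM /= map_polyC map_polyXn hornerM hornerC hornerXn.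
have E q : mpoly_meval__canonical__Algebra_Additive (fun i => v (widen_ord (leqnSn n) i)) q = q.@[fun i => v (widen_ord (leqnSn n) i)] by [].
rewrite E.
rewrite mevalZ mevalX big_ord_recr /= mulrA; congr (_ * _ * _).
by apply: eq_bigr => i _; rewrite mnmE.
Qed.

Lemma mnm_split n (m0 m : 'X_{1..n.+1}) :
  (m0 == m) = (m0 ord_max == m ord_max) &&
   ([multinom m0 (widen_ord (leqnSn n) i) | i < n] ==
    [multinom m (widen_ord (leqnSn n) i) | i < n]).
Proof.
apply/eqP/andP => [-> //|[/eqP h1 /eqP h2]].
apply/mnmP => i; case: (unliftP ord_max i) => [i'|] ->; last by [].
move/mnmP: h2 => /(_ i'); rewrite !mnmE.
have -> : lift ord_max i' = widen_ord (leqnSn n) i'.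
  by apply: val_inj; rewrite /= /bump leqNgt ltn_ord.
by [].
Qed.

Lemma muni_inj n (p : {mpoly K[n.+1]}) : muni p = 0 -> p = 0.
Proof.
move=> h; apply/mpolyP => m; rewrite mcoeff0.
pose m' := [multinom m (widen_ord (leqnSn n) i) | i < n].
have H : ((muni p)`_(m ord_max))@_m' = 0 by rewrite h coef0 mcoeff0.
rewrite -H muniE coef_sum raddf_sum /=.
rewrite {1}(mpolyE p) raddf_sum /=.
apply: eq_bigr => m0 _.
rewrite coefZ coefXn mcoeffZ mcoeffX.
rewrite mnm_split.
case: (m0 ord_max =P m ord_max) => [->|ne].
  by rewrite eqxx mulr1 mcoeffZ mcoeffX.
have -> : (m ord_max == m0 ord_max) = false by apply/eqP => e; apply: ne.
rewrite mulr0 /= mulr0; by rewrite raddf0.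
Qed.

End MP.
Section MP2.
Variable K : closedFieldType.
Lemma mpoly_nonvanish n (p : {mpoly K[n]}) : p != 0 -> exists v, p.@[v] != 0.
Proof.
elim: n p => [|n IH] p pn0.
  have m0 : forall m : 'X_{1..0}, m = 0%MM by move=> m; apply/mnmP => -[].
  have Hp : p = (p@_0%MM)%:MP.
    by apply/mpolyP => m; rewrite mcoeffC (m0 m) eqxx mulr1.
  exists (fun _ => 0); rewrite Hp mevalC.
  by apply: contra pn0 => /eqP h; rewrite Hp h.
have mu0 : muni p != 0 by apply: contra pn0 => /eqP /muni_inj ->.
have lc0 : lead_coef (muni p) != 0 by rewrite lead_coef_eq0.
have [v' hv'] := IH _ lc0.
pose P := map_poly (meval v') (muni p).
have P0 : P != 0.
  apply: contra hv' => /eqP hP.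
  by rewrite /lead_coef -coef_map -/P hP coef0.
have [t ht] := closed_nonrootP P P0.
pose v := fun i : 'I_n.+1 => if insub (val i) is Some i' then v' i' else t.
exists v; rewrite muni_eval.
have -> : v ord_max = t by rewrite /v insubF //= ltnn.
have -> : map_poly (meval (fun i => v (widen_ord (leqnSn n) i))) (muni p) = P.
  apply: eq_map_poly => q; apply: meval_eq => i.
  rewrite /v insubT /=; first by rewrite ltn_ord.
  by move=> Hi; congr v'; apply: val_inj.
exact: ht.
Qed.
End MP2.
Section PA.
Variable K : closedFieldType.

Lemma det_lin_eval k (M0 M1 : 'M[K]_k) (t : K) :
  (\det (map_mx polyC M0 + 'X *: map_mx polyC M1)).[t] = \det (M0 + t *: M1).
Proof.
rewrite -[LHS]/(horner_eval t _) -det_map_mx; congr (\det _).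
apply/matrixP => i j; rewrite !mxE rmorphD rmorphM /= /horner_eval hornerX !hornerC.
by [].
Qed.

Lemma exists_good (F : fieldType) (phi : {rmorphism F -> K}) k l
  (A : 'M[F]_(k + l, k)) : \rank A = k ->
  exists X : 'M[K]_(k, l), \det (row_mx 1%:M X *m map_mx phi A) != 0.
Proof.
move=> rA.
set A' := map_mx phi A.
have fA : row_full A' by rewrite /row_full mxrank_map rA.
have [S hS] := row_fullP fA.
set T := usubmx A'; set B := dsubmx A'.
set S1 := lsubmx S; set S2 := rsubmx S.
have hS' : S1 *m T + S2 *m B = 1%:M by rewrite -mul_row_col hsubmxK vsubmxK.
pose p1 := \det (map_mx polyC 1%:M + 'X *: map_mx polyC S1).
pose p2 := \det (map_mx polyC T + 'X *: map_mx polyC 1%:M).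
have p10 : p1 != 0.
  apply/negP => /eqP h; have := det_lin_eval 1%:M S1 0.
  by rewrite -/p1 h horner0 scale0r addr0 det1 => /eqP; rewrite eq_sym oner_eq0.
have p20 : p2 != 0.
  have -> : p2 = char_poly (- T).
    rewrite /p2 /char_poly; congr (\det _); apply/matrixP => i j.
    rewrite !mxE; case: (i == j) => /=; rewrite ?mulr1n ?mulr0n ?mulr1 ?mulr0 ?polyCN ?opprK ?addr0 ?sub0r ?opprK //;
      by rewrite ?add0r // addrC.
  exact: monic_neq0 (char_poly_monic _).
have [t ht] := closed_nonrootP _ (mulf_neq0 p10 p20).
move: ht; rewrite /root hornerM mulf_eq0 negb_or => /andP[d1 d2].
rewrite /p1 /p2 !det_lin_eval in d1 d2.
set G1 := 1%:M + t *: S1 in d1.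
have uG1 : G1 \in unitmx by rewrite unitmxE unitfE.
exists (invmx G1 *m (t *: S2)).
rewrite -[A'](vsubmxK) mul_row_col mul1mx -/T -/B.
have E : G1 *m (T + invmx G1 *m (t *: S2) *m B) = T + t *: 1%:M.
  rewrite mulmxDr !mulmxA mulmxV // mul1mx /G1 mulmxDl mul1mx -!scalemxAl -addrA -scalerDr.
  by rewrite hS'.
apply: contra d2 => /eqP h.
by rewrite -E det_mulmx h mulr0.
Qed.
End PA.
Lemma main_gen (F : finFieldType) (K : closedFieldType) (phi : {rmorphism F -> K}) k l :
  generic phi (fun x : 'I_(k * l) -> K => S_MRD phi (coords_to_mx x)).
Proof.
pose Xp : 'M[{mpoly F[k * l]}]_(k, l) := vec_mx (\row_i 'X_i).
pose D (A : 'M[F]_(k + l, k)) := \det (row_mx 1%:M Xp *m map_mx (@mpolyC _ F) A).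
pose P := \prod_(A : 'M[F]_(k + l, k) | \rank A == k) D A.
have evalD : forall x A, peval phi (D A) x =
    \det (row_mx 1%:M (coords_to_mx x) *m map_mx phi A).
  move=> x A.
  pose h : {rmorphism {mpoly F[k * l]} -> K} := (meval x \o map_mpoly phi).
  rewrite -[LHS]/(h (D A)) /D -det_map_mx map_mxM map_row_mx map_mx1 -map_mx_comp.
  congr (\det (row_mx _ _ *m _)).
    rewrite /Xp /coords_to_mx map_vec_mx; congr vec_mx.
    by apply/rowP => i; rewrite !mxE /h /= map_mpolyX mevalXU.
  by apply: eq_map_mx => c; rewrite /h /= map_mpolyC mevalC.
have evalP : forall x, peval phi P x =
    \prod_(A : 'M[F]_(k + l, k) | \rank A == k)
       \det (row_mx 1%:M (coords_to_mx x) *m map_mx phi A).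
  move=> x; pose h : {rmorphism {mpoly F[k * l]} -> K} := (meval x \o map_mpoly phi).
  rewrite -[LHS]/(h P) rmorph_prod; apply: eq_bigr => A _; exact: evalD.
exists (fun x => peval phi P x != 0); split; [|split].
- exists (fun p => p = P) => x; split.
    by move=> h H; move: h; rewrite (H P erefl) eqxx.
  by move=> h; apply/eqP => e; apply: h => p ->.
- have : map_mpoly phi P != 0.
    rewrite rmorph_prod; apply/prodf_neq0 => A /eqP rA.
    have [X hX] := exists_good phi rA.
    pose x := fun i => mxvec X 0 i.
    have hx : coords_to_mx x = X.
      rewrite /coords_to_mx -[RHS]mxvecK; congr vec_mx.
      by apply/rowP => i; rewrite mxE.
    apply: contra hX => /eqP h0.
    by rewrite -hx -evalD /peval h0 meval0.
  move/mpoly_nonvanish => [x hx]; exists x; exact: hx.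
- move=> x; rewrite evalP => /prodf_neq0 H A rA.
  by apply: H; apply/eqP.
Qed.

Unset Implicit Arguments. Set Strict Implicit. Set Printing Implicit Defensive.

Theorem theorem3p1
  (q m n k : nat) (Fq Fqm : finFieldType) (K : closedFieldType)
  (f : {rmorphism Fq -> Fqm}) (g : {rmorphism Fqm -> K})
  (hq : exists p e, prime p /\ q = (p ^ e.+1)%N)
  (hFq : #|Fq| = q) (hm : (1 <= m)%N) (hFqm : #|Fqm| = (q ^ m)%N)
  (hK : algebraic_over g)
  (hk : (1 <= k)%N) (hkn : (k <= n - 1)%N) :
  generic (g \o f : {rmorphism Fq -> K})
    (fun x : 'I_(k * (n - k)) -> K =>
       S_MRD (g \o f : {rmorphism Fq -> K}) (coords_to_mx x)).
Proof.
exact: main_gen.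
Qed.
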